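(* Let $\mathcal{A}\in\mathbb{C}^{I_{1\ldots N}\times I_{1\ldots N}}$, and let $\mathcal{M},\mathcal{N}\in\mathbb{C}^{I_{1\ldots N}\times I_{1\ldots N}}$ be Hermitian positive definite tensors. Let $\{\mathcal{U}_1,\ldots,\mathcal{U}_r\}\subset\mathbb{C}^{I_{1\ldots N}}$ be $\mathcal{M}$-orthonormal and $\{\mathcal{V}_1,\ldots,\mathcal{V}_r\}\subset\mathbb{C}^{I_{1\ldots N}}$ be $\mathcal{N}^{-1}$-orthonormal. If $\mathcal{A}=\mathcal{U}_1*_1\mathcal{V}_1^H+\cdots+\mathcal{U}_r*_1\mathcal{V}_r^H$, then $$\mathcal{A}^{\dagger}_{\mathcal{M},\mathcal{N}}=\mathcal{N}^{-1}*_N(\mathcal{V}_1*_1\mathcal{U}_1^H+\cdots+\mathcal{V}_r*_1\mathcal{U}_r^H)*_N\mathcal{M}$$ and $W(\mathcal{A}^{\dagger}_{\mathcal{M},\mathcal{N}})=W(\mathcal{A}^{\#}_{\mathcal{M}\mathcal{N}})$.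
   Context: Write $I_{1\ldots N}$ for $I_1\times\cdots\times I_N$. Einstein product: $(\mathcal{A}*_N\mathcal{B})_{i_1\ldots i_Nj_1\ldots j_L}=\sum_{k_1,\ldots,k_N}a_{i_1\ldots i_Nk_1\ldots k_N}b_{k_1\ldots k_Nj_1\ldots j_L}$ (also when $\mathcal{B}\in\mathbb{C}^{I_{1\ldots N}}$). $\mathcal{A}^H$ is the conjugate transpose; inverses are w.r.t. $*_N$. For $\mathcal{X},\mathcal{Y}\in\mathbb{C}^{I_{1\ldots N}}$, $\mathcal{X}*_1\mathcal{Y}^H$ denotes the tensor in $\mathbb{C}^{I_{1\ldots N}\times I_{1\ldots N}}$ with $(i_1,\ldots,i_N,j_1,\ldots,j_N)$-entry $x_{i_1\ldots i_N}\overline{y_{j_1\ldots j_N}}$. $\langle\mathcal{X},\mathcal{Y}\rangle=\mathcal{Y}^H*_N\mathcal{X}=\sum\overline{y_{i_1\ldots i_N}}x_{i_1\ldots i_N}$ and $\|\mathcal{X}\|=\langle\mathcal{X},\mathcal{X}\rangle^{1/2}$. $\mathcal{M}$ is Hermitian positive definite if $\mathcal{M}^H=\mathcal{M}$ and $\langle\mathcal{M}*_N\mathcal{X},\mathcal{X}\rangle>0$ for nonzero $\mathcal{X}$. For a Hermitian positive definite $\mathcal{P}$, a set $\{\mathcal{X}_1,\ldots,\mathcal{X}_r\}$ is $\mathcal{P}$-orthonormal if $\langle\mathcal{P}*_N\mathcal{X}_i,\mathcal{X}_j\rangle=\delta_{ij}$. Numerical range: $W(\mathcal{A})=\{\langle\mathcal{A}*_N\mathcal{X},\mathcal{X}\rangle:\|\mathcal{X}\|=1\}$.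 Weighted conjugate transpose: $\mathcal{A}^{\#}_{\mathcal{M}\mathcal{N}}=\mathcal{N}^{-1}*_N\mathcal{A}^H*_N\mathcal{M}$. Weighted Moore-Penrose inverse $\mathcal{A}^{\dagger}_{\mathcal{M},\mathcal{N}}$: the unique $\mathcal{X}$ with $\mathcal{A}*_N\mathcal{X}*_N\mathcal{A}=\mathcal{A}$, $\mathcal{X}*_N\mathcal{A}*_N\mathcal{X}=\mathcal{X}$, $(\mathcal{M}*_N\mathcal{A}*_N\mathcal{X})^H=\mathcal{M}*_N\mathcal{A}*_N\mathcal{X}$, $(\mathcal{N}*_N\mathcal{X}*_N\mathcal{A})^H=\mathcal{N}*_N\mathcal{X}*_N\mathcal{A}$. *)

(* Defs.v *)
From HB Require Import structures.
From mathcomp Require Import all_boot all_order all_algebra.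
From mathcomp Require Import complex reals.
From Stdlib Require Import ClassicalEpsilon.
Set Implicit Arguments. Unset Strict Implicit. Unset Printing Implicit Defensive.
Import Order.TTheory GRing.Theory Num.Theory.
Local Open Scope ring_scope.

(* Multi-indices (i_1,...,i_N) in I_1 x ... x I_N, with dims d : 'I_N -> nat. *)
Definition idx (N : nat) (d : 'I_N -> nat) : finType :=
  {dffun forall k : 'I_N, 'I_(d k)}.

Section Tensors.
Variables (C : numClosedFieldType) (N : nat) (d : 'I_N -> nat).
Local Notation I := (idx d).

Definition tensN := {ffun I -> C}.
Definition tens2N := {ffun I * I -> C}.

Definition ein (A B : tens2N) : tens2N :=
  [ffun ij => \sum_(k : I) A (ij.1, k) * B (k, ij.2)].
Definition einv (A : tens2N) (X : tensN) : tensN :=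
  [ffun i => \sum_(k : I) A (i, k) * X k].
Definition tid : tens2N := [ffun ij => (ij.1 == ij.2)%:R].
Definition tH (A : tens2N) : tens2N := [ffun ij => (A (ij.2, ij.1))^*].
Definition outer (X Y : tensN) : tens2N := [ffun ij => X ij.1 * (Y ij.2)^*].
Definition inner (X Y : tensN) : C := \sum_(i : I) (Y i)^* * X i.
Definition tnorm (X : tensN) : C := sqrtC (inner X X).

Definition tens_hermitian (A : tens2N) : Prop := tH A = A.
Definition tens_hpd (A : tens2N) : Prop :=
  tens_hermitian A /\ forall X : tensN, X != 0 -> 0 < inner (einv A X) X.

Definition is_tinv (A B : tens2N) : Prop := ein A B = tid /\ ein B A = tid.

Definition tens_orthonormal (P : tens2N) (r : nat) (X : 'I_r -> tensN) : Prop :=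
  forall i j : 'I_r, inner (einv P (X i)) (X j) = (i == j)%:R.

Definition numrange (A : tens2N) : C -> Prop :=
  fun z => exists X : tensN, tnorm X = 1 /\ z = inner (einv A X) X.

(* weighted conjugate transpose A^#_{MN} = N^{-1} *N A^H *N M, N^{-1} = Ninv *)
Definition wct (A M Ninv : tens2N) : tens2N := ein (ein Ninv (tH A)) M.

Definition wpenrose (A M N' X : tens2N) : Prop :=
  [/\ ein (ein A X) A = A, ein (ein X A) X = X,
      tH (ein M (ein A X)) = ein M (ein A X)
    & tH (ein N' (ein X A)) = ein N' (ein X A)].

Definition wmpinv (A M N' : tens2N) : tens2N :=
  epsilon (inhabits (0 : tens2N)) (wpenrose A M N').

End Tensors.

(* Main.v *)
Require Import Defs.
From HB Require Import structures.
From mathcomp Require Import all_boot all_order all_algebra.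
From mathcomp Require Import complex reals.
From Stdlib Require Import ClassicalEpsilon.
From mathcomp Require Import ring.
Import Order.TTheory GRing.Theory Num.Theory.
Local Open Scope ring_scope.

Section Gen.
Variables (C : numClosedFieldType) (N : nat) (d : 'I_N -> nat).
Local Notation I := (idx d).
Local Notation T2 := (tens2N C d).
Local Notation T1 := (tensN C d).

Definition sc1 (c : C) (f : T1) : T1 := [ffun x => c * f x].
Definition sc2 (c : C) (f : T2) : T2 := [ffun x => c * f x].

Lemma einA (A B D : T2) : ein (ein A B) D = ein A (ein B D).
Proof.
apply/ffunP=> -[i j]; rewrite !ffunE /=.
under eq_bigr do rewrite ffunE /= big_distrl.
under [RHS]eq_bigr do rewrite ffunE /= big_distrr.
rewrite exchange_big /=; apply: eq_bigr => k _; apply: eq_bigr => l _.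
by rewrite mulrA.
Qed.

Lemma einv_ein (A B : T2) (X : T1) : einv (ein A B) X = einv A (einv B X).
Proof.
apply/ffunP=> i; rewrite !ffunE /=.
under eq_bigr do rewrite ffunE /= big_distrl.
under [RHS]eq_bigr do rewrite ffunE /= big_distrr.
rewrite exchange_big /=; apply: eq_bigr => k _; apply: eq_bigr => l _.
by rewrite mulrA.
Qed.

Lemma einv_tid (X : T1) : einv (tid C d) X = X.
Proof.
apply/ffunP=> i; rewrite !ffunE (bigD1 i) //= ffunE /= eqxx mul1r big1 ?addr0 //.
by move=> k /negbTE ki; rewrite ffunE /= eq_sym ki mul0r.
Qed.

Lemma ein_outer_l (U V : T1) (B : T2) :
  ein (outer U V) B = outer U (einv (tH B) V).
Proof.
apply/ffunP=> -[i j]; rewrite !ffunE /= rmorph_sum mulr_sumr.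
apply: eq_bigr => k _; rewrite !ffunE /= rmorphM /= conjCK.
by rewrite -mulrA [_ * B _]mulrC.
Qed.

Lemma ein_outer_r (U V : T1) (B : T2) :
  ein B (outer U V) = outer (einv B U) V.
Proof.
apply/ffunP=> -[i j]; rewrite !ffunE /= mulr_suml.
by apply: eq_bigr => k _; rewrite !ffunE /= mulrA.
Qed.

Lemma einv_outer (U V W : T1) : einv (outer U V) W = sc1 (inner W V) U.
Proof.
apply/ffunP=> i; rewrite !ffunE /= /inner mulr_suml.
by apply: eq_bigr => k _; rewrite !ffunE /=; ring.
Qed.

Lemma outerZ (c : C) (U V : T1) : outer (sc1 c U) V = sc2 c (outer U V).
Proof. by apply/ffunP=> -[i j]; rewrite !ffunE /= mulrA. Qed.

Lemma ein_outer (U V W Z : T1) :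
  ein (outer U V) (outer W Z) = sc2 (inner W V) (outer U Z).
Proof. by rewrite ein_outer_r einv_outer outerZ. Qed.

Lemma tH_outer (U V : T1) : tH (outer U V) = outer V U.
Proof. by apply/ffunP=> -[i j]; rewrite !ffunE /= rmorphM /= conjCK mulrC. Qed.

Lemma tHK (A : T2) : tH (tH A) = A.
Proof. by apply/ffunP=> -[i j]; rewrite !ffunE /= conjCK. Qed.

Lemma tH_ein (A B : T2) : tH (ein A B) = ein (tH B) (tH A).
Proof.
apply/ffunP=> -[i j]; rewrite !ffunE /= rmorph_sum.
by apply: eq_bigr => k _; rewrite !ffunE /= rmorphM /= mulrC.
Qed.

Lemma tH_sum r (F : 'I_r -> T2) : tH (\sum_(k < r) F k) = \sum_(k < r) tH (F k).
Proof.
apply/ffunP=> -[i j]; rewrite !ffunE /= !sum_ffunE rmorph_sum.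
by apply: eq_bigr => k _; rewrite ffunE.
Qed.

Lemma ein_suml r (F : 'I_r -> T2) B :
  ein (\sum_(k < r) F k) B = \sum_(k < r) ein (F k) B.
Proof.
apply/ffunP=> -[i j]; rewrite !ffunE /= sum_ffunE.
under eq_bigr do rewrite sum_ffunE big_distrl.
rewrite exchange_big; apply: eq_bigr => k _; by rewrite ffunE.
Qed.

Lemma ein_sumr r (F : 'I_r -> T2) B :
  ein B (\sum_(k < r) F k) = \sum_(k < r) ein B (F k).
Proof.
apply/ffunP=> -[i j]; rewrite !ffunE /= sum_ffunE.
under eq_bigr do rewrite sum_ffunE big_distrr.
rewrite exchange_big; apply: eq_bigr => k _; by rewrite ffunE.
Qed.

Lemma sum_delta r (k : 'I_r) (F : 'I_r -> T2) :
  \sum_(l < r) sc2 (l == k)%:R (F l) = F k.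
Proof.
rewrite (bigD1 k) //= big1 ?addr0.
  by apply/ffunP=> x; rewrite ffunE eqxx mul1r.
by move=> l /negbTE kl; apply/ffunP=> x; rewrite !ffunE kl mul0r.
Qed.

Lemma ein_sub (A B D : T2) : ein A (B - D) = ein A B - ein A D.
Proof.
apply/ffunP=> -[i j]; rewrite !ffunE /= -sumrB.
by apply: eq_bigr => k _; rewrite !ffunE /= mulrBr.
Qed.

Lemma hpd_inj (M B D : T2) : tens_hpd M -> ein M B = ein M D -> B = D.
Proof.
move=> [_ Mpos] E; apply/eqP; rewrite -subr_eq0; apply/eqP.
have E0 : ein M (B - D) = 0 by rewrite ein_sub E subrr.
apply/ffunP=> -[i j].
set X : T1 := [ffun i => (B - D) (i, j)].
have X0 : X = 0.
  apply/eqP; apply/negPn/negP => /Mpos.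
  have -> : einv M X = 0.
    apply/ffunP=> l; move/ffunP: E0 => /(_ (l, j)).
    have -> : (0 : T1) l = 0 by rewrite ffunE.
    have -> : (0 : T2) (l, j) = 0 by rewrite ffunE.
    rewrite !ffunE /= => E1; rewrite -[RHS]E1; apply: eq_bigr => k _; by rewrite ffunE.
  by rewrite /inner big1 ?ltxx // => k _; rewrite !ffunE mulr0.
move/ffunP: X0 => /(_ i); rewrite ffunE => ->.
by rewrite !ffunE.
Qed.

Lemma uniqL (M E F : T2) : tens_hermitian M -> tH (ein M E) = ein M E ->
  tH (ein M F) = ein M F -> ein F E = E -> ein E F = F -> ein M E = ein M F.
Proof.
rewrite /tens_hermitian => hM hE hF FE EF.
by rewrite -{1}FE -einA -{1}hF tH_ein hM einA -hE -tH_ein einA EF hF.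
Qed.

Lemma uniqR (M E F : T2) : tens_hermitian M -> tH (ein M E) = ein M E ->
  tH (ein M F) = ein M F -> ein E F = E -> ein F E = F -> ein M E = ein M F.
Proof.
rewrite /tens_hermitian => hM hE hF EF FE.
by rewrite -{1}EF -einA -{1}hE tH_ein hM einA -{1}hF -tH_ein einA FE hF.
Qed.

Lemma wpenrose_uniq (A M N' X Y : T2) : tens_hpd M -> tens_hpd N' ->
  wpenrose A M N' X -> wpenrose A M N' Y -> X = Y.
Proof.
move=> hM hN [X1 X2 X3 X4] [Y1 Y2 Y3 Y4].
have AXY : ein A X = ein A Y.
  apply: (@hpd_inj M _ _ hM); apply: uniqL => //; first exact: hM.1.
  - by rewrite -einA Y1.
  - by rewrite -einA X1.
have XAY : ein X A = ein Y A.
  apply: (@hpd_inj N' _ _ hN); apply: uniqR => //; first exact: hN.1.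
  - by rewrite einA -[ein A (ein Y A)]einA Y1.
  - by rewrite einA -[ein A (ein X A)]einA X1.
by rewrite -X2 einA AXY -einA XAY Y2.
Qed.

End Gen.

Section Gen2.
Variables (C : numClosedFieldType) (N : nat) (d : 'I_N -> nat).
Local Notation T2 := (tens2N C d).
Local Notation T1 := (tensN C d).

Lemma inner_conj (X Y : T1) : inner X Y = (inner Y X)^*.
Proof.
rewrite /inner rmorph_sum; apply: eq_bigr => k _.
by rewrite rmorphM /= conjCK mulrC.
Qed.

Lemma sum_outer_mul r (P Q R S : 'I_r -> T1) :
  (forall k l, inner (R l) (Q k) = (l == k)%:R) ->
  ein (\sum_(k < r) outer (P k) (Q k)) (\sum_(l < r) outer (R l) (S l))
  = \sum_(k < r) outer (P k) (S k).
Proof.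
move=> H; rewrite ein_suml; apply: eq_bigr => k _; rewrite ein_sumr.
under eq_bigr do rewrite ein_outer H.
exact: sum_delta.
Qed.
End Gen2.

Local Open Scope complex_scope.

Theorem theorem6p13 (R : realType) (N : nat) (d : 'I_N -> nat)
  (A M Nt Ninv : tens2N R[i] d) (r : nat) (U V : 'I_r -> tensN R[i] d) :
  tens_hpd M -> tens_hpd Nt -> is_tinv Nt Ninv ->
  tens_orthonormal M U -> tens_orthonormal Ninv V ->
  A = \sum_(k < r) outer (U k) (V k) ->
  wmpinv A M Nt = ein (ein Ninv (\sum_(k < r) outer (V k) (U k))) M /\
  numrange (wmpinv A M Nt) = numrange (wct A M Ninv).
Proof.
move=> hM hN [NNi NiN] oU oV EA.
have MH : tH M = M := hM.1.
have NH : tH Nt = Nt := hN.1.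
pose U' k := einv M (U k).
pose V' k := einv Ninv (V k).
have oV' : forall k l, inner (V' l) (V k) = (l == k)%:R by move=> k l; exact: oV.
have oU' : forall k l, inner (U l) (U' k) = (l == k)%:R.
  by move=> k l; rewrite inner_conj oU conjC_nat eq_sym.
have Xe : ein (ein Ninv (\sum_(k < r) outer (V k) (U k))) M
          = \sum_(k < r) outer (V' k) (U' k).
  rewrite ein_sumr ein_suml; apply: eq_bigr => k _.
  by rewrite ein_outer_r ein_outer_l MH.
have We : wct A M Ninv = ein (ein Ninv (\sum_(k < r) outer (V k) (U k))) M.
  rewrite /wct EA tH_sum; congr (ein (ein _ _) _); apply: eq_bigr => k _.
  exact: tH_outer.
set X0 := ein (ein Ninv _) M.
have AX : ein A X0 = \sum_(k < r) outer (U k) (U' k).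
  by rewrite EA /X0 Xe sum_outer_mul.
have XA : ein X0 A = \sum_(k < r) outer (V' k) (V k).
  by rewrite EA /X0 Xe sum_outer_mul.
have P : wpenrose A M Nt X0.
  split.
  - by rewrite AX EA sum_outer_mul.
  - by rewrite XA /X0 Xe sum_outer_mul.
  - have -> : ein M (ein A X0) = \sum_(k < r) outer (U' k) (U' k).
      by rewrite AX ein_sumr; apply: eq_bigr => k _; rewrite ein_outer_r.
    by rewrite tH_sum; apply: eq_bigr => k _; rewrite tH_outer.
  - have -> : ein Nt (ein X0 A) = \sum_(k < r) outer (V k) (V k).
      rewrite XA ein_sumr; apply: eq_bigr => k _.
      by rewrite ein_outer_r /V' -einv_ein NNi einv_tid.
    by rewrite tH_sum; apply: eq_bigr => k _; rewrite tH_outer.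
have Hw : wmpinv A M Nt = X0.
  have := epsilon_spec (inhabits (0 : tens2N R[i] d)) (wpenrose A M Nt)
            (ex_intro _ _ P).
  rewrite /wmpinv => H; exact: (@wpenrose_uniq _ _ _ A M Nt _ _ hM hN H P).
by rewrite Hw We.
Qed.
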